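(* Let $\alpha:X\to P(A\times X+1)$ be a discrete probabilistic transition system with $X$ finite, and let $x,y\in X$. Then the algorithm $\texttt{HKC}^\infty(x,y)$ described in the context terminates (for any order of extraction from $\mathit{todo}$), and it returns true if and only if $\langle\!\langle x\rangle\!\rangle=\langle\!\langle y\rangle\!\rangle$.
   Context: $A$ is a finite alphabet, $1=\{*\}$, $P(Y)$ the set of finitely supported probability distributions on $Y$, $\delta_x$ the point mass at $x$. $A^\infty=A^*\cup A^\omega$ with $\sigma$-algebra generated by $\{\emptyset\}\cup\{\{w\}\mid w\in A^*\}\cup\{wA^\infty\mid w\in A^*\}$. The trace semantics $\langle\!\langle x\rangle\!\rangle$ is the unique family of sub-probability measures on $A^\infty$ with $\langle\!\langle x\rangle\!\rangle(A^\infty)=1$, $\langle\!\langle x\rangle\!\rangle(\{\varepsilon\})=\alpha(x)( * )$, $\langle\!\langle x\rangle\!\rangle(awA^\infty)=\sum_y\alpha(x)(a,y)\langle\!\langle y\rangle\!\rangle(wA^\infty)$, $\langle\!\langle x\rangle\!\rangle(\{aw\})=\sum_y\alpha(x)(a,y)\langle\!\langle y\rangle\!\rangle(\{w\})$. On $\mathbb R^X$ define linear maps $\beta_1(u)=\sum_x u(x)$, $\beta_*(u)=\sum_x u(x)\alpha(x)( * )$, $\tau_a(u)(y)=\sum_x u(x)\alpha(x)(a,y)$. For $R\subseteq\mathbb R^X\times\mathbb R^X$, its congruence closure $c(R)$ is the smallest relation containing $R$ that is reflexive, symmetric, transitive, and closed under $(u,v)\mapsto(\lambda u,\lambda v)$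 for $\lambda\in\mathbb R$ and under $(u,v),(u',v')\mapsto(u+u',v+v')$. Algorithm $\texttt{HKC}^\infty(x,y)$: set $R:=\emptyset$, $\mathit{todo}:=\{(\delta_x,\delta_y)\}$; while $\mathit{todo}\neq\emptyset$: extract a pair $(u,v)$ from $\mathit{todo}$; if $(u,v)\in c(R)$, continue with the next iteration; if $\beta_1(u)\neq\beta_1(v)$ or $\beta_*(u)\neq\beta_*(v)$, return false; for all $a\in A$ insert $(\tau_a(u),\tau_a(v))$ into $\mathit{todo}$; insert $(u,v)$ into $R$. When $\mathit{todo}$ is empty, return true. *)

(* Defs.v *)
From HB Require Import structures.
From mathcomp Require Import all_boot all_order all_algebra.
Set Implicit Arguments. Unset Strict Implicit. Unset Printing Implicit Defensive.
Import Order.TTheory GRing.Theory Num.Theory.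
Local Open Scope ring_scope.

Section PTS.
Variables (R : realFieldType) (A X : finType).

(* alpha : X -> P(A * X + 1); the point * of 1 is None, (a,y) is Some (a,y). *)
Definition pts (alpha : X -> option (A * X) -> R) : Prop :=
  (forall x z, 0 <= alpha x z) /\ (forall x, \sum_z alpha x z = 1).

Variable alpha : X -> option (A * X) -> R.

(* Values of the trace measure on the generating sets of the sigma-algebra. *)
Fixpoint tr_cyl (w : seq A) : X -> R :=
  match w with
  | [::] => fun _ => 1
  | a :: w' => fun x => \sum_y alpha x (Some (a, y)) * tr_cyl w' y
  end.

Fixpoint tr_sing (w : seq A) : X -> R :=
  match w with
  | [::] => fun x => alpha x None
  | a :: w' => fun x => \sum_y alpha x (Some (a, y)) * tr_sing w' y
  end.

(* The generators of the sigma-algebra on A^oo: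
   GEmpty = emptyset, GSing w = {w}, GCyl w = w A^oo. *)
Inductive gen := GEmpty | GSing of seq A | GCyl of seq A.

(* <<x>> restricted to the generating family. *)
Definition trace (x : X) (g : gen) : R :=
  match g with
  | GEmpty => 0
  | GSing w => tr_sing w x
  | GCyl w => tr_cyl w x
  end.

Local Notation vec := {ffun X -> R}.

Definition delta (x : X) : vec := [ffun z => (z == x)%:R].
Definition beta1 (u : vec) : R := \sum_x u x.
Definition betastar (u : vec) : R := \sum_x u x * alpha x None.
Definition tau (a : A) (u : vec) : vec :=
  [ffun y => \sum_x u x * alpha x (Some (a, y))].

Inductive cc (Rel : seq (vec * vec)) : vec -> vec -> Prop :=
| cc_base u v : (u, v) \in Rel -> cc Rel u v
| cc_refl u : cc Rel u u
| cc_sym u v : cc Rel u v -> cc Rel v u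
| cc_trans u v w : cc Rel u v -> cc Rel v w -> cc Rel u w
| cc_scale (l : R) u v : cc Rel u v -> cc Rel [ffun z => l * u z] [ffun z => l * v z]
| cc_add u v u' v' : cc Rel u v -> cc Rel u' v' -> cc Rel (u + u') (v + v').

Inductive state := Running of seq (vec * vec) & seq (vec * vec) | Done of bool.

(* One iteration of the while loop; the extracted pair is an arbitrary
   element of todo (any extraction order). *)
Inductive hkc_step : state -> state -> Prop :=
| step_empty Rel : hkc_step (Running Rel [::]) (Done true)
| step_skip Rel t1 t2 u v :
    cc Rel u v ->
    hkc_step (Running Rel (t1 ++ (u, v) :: t2)) (Running Rel (t1 ++ t2))
| step_fail Rel t1 t2 u v :
    ~ cc Rel u v ->
    (beta1 u != beta1 v) || (betastar u != betastar v) ->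
    hkc_step (Running Rel (t1 ++ (u, v) :: t2)) (Done false)
| step_expand Rel t1 t2 u v :
    ~ cc Rel u v ->
    beta1 u = beta1 v -> betastar u = betastar v ->
    hkc_step (Running Rel (t1 ++ (u, v) :: t2))
             (Running ((u, v) :: Rel)
                      (t1 ++ t2 ++ [seq (tau a u, tau a v) | a <- enum A])).

Definition hkc_init (x y : X) : state := Running [::] [:: (delta x, delta y)].

Inductive reachable (s : state) : state -> Prop :=
| reach_refl : reachable s s
| reach_step s1 s2 : reachable s s1 -> hkc_step s1 s2 -> reachable s s2.

End PTS.

(* Main.v *)
Require Import Defs.
From HB Require Import structures.
From mathcomp Require Import all_boot all_order all_algebra.
From Stdlib Require Import Classical FunctionalExtensionality.
From mathcomp Require Import ring zify.
Set Implicit Arguments. Unset Strict Implicit. Unset Printing Implicit Defensive.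
Import Order.TTheory GRing.Theory Num.Theory.
Local Open Scope ring_scope.

Section Proofs.
Variables (R : realFieldType) (A X : finType).
Variable alpha : X -> option (A * X) -> R.
Local Notation vec := {ffun X -> R}.
Local Notation step := (hkc_step alpha).
Local Notation cc := (@cc R X).

Definition V := {ffun X -> R^o}.
Definition diffs (Rel : seq (vec * vec)) : seq V := [seq (p.1 - p.2 : V) | p <- Rel].
Definition dimRel Rel := \dim <<diffs Rel>>%VS.
Definition N := \dim (fullv : {vspace V}).

Lemma cc_mono (Rel Rel' : seq (vec * vec)) u v :
  {subset Rel <= Rel'} -> cc Rel u v -> cc Rel' u v.
Proof.
move=> sub; elim.
- by move=> ?? H; apply: cc_base; apply: sub.
- by move=> ?; apply: cc_refl.
- by move=> ?? _ H; apply: cc_sym.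
- by move=> ??? _ H1 _ H2; apply: cc_trans H1 H2.
- by move=> ??? _ H; apply: cc_scale.
- by move=> ???? _ H1 _ H2; apply: cc_add.
Qed.

Lemma span_cc Rel (w : V) : w \in <<diffs Rel>>%VS ->
  exists a b, cc Rel a b /\ w = a - b.
Proof.
elim: Rel w => [|[u v] Rel IH] w /=.
  rewrite span_nil memv0 => /eqP ->.
  by exists 0, 0; split; [apply: cc_refl | rewrite subr0].
rewrite span_cons => /memv_addP [w1 /vlineP [k ->] [w2 /IH [a [b [Hab ->]]] ->]].
exists ([ffun z => k * u z] + a), ([ffun z => k * v z] + b); split.
  apply: cc_add; first by apply: cc_scale; apply: cc_base; rewrite inE eqxx.
  by apply: cc_mono Hab => p; rewrite inE => ->; rewrite orbT.
apply/ffunP => z; rewrite !ffunE /= -[k *: _]/(k * (u z - v z)); ring.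
Qed.

Lemma notcc_notspan Rel u v : ~ cc Rel u v -> (u - v : V) \notin <<diffs Rel>>%VS.
Proof.
move=> Hn; apply/negP => /span_cc [a [b [Hab Hw]]]; apply: Hn.
have -> : u = a + (v - b) by apply/ffunP => z; move/ffunP: Hw => /(_ z);
  rewrite !ffunE => H; rewrite -[u z](subrK (v z)) H; ring.
have {2}-> : v = b + (v - b) by rewrite addrC subrK.
by apply: cc_add => //; apply: cc_refl.
Qed.

Lemma dim_expand Rel u v : ~ cc Rel u v ->
  (dimRel Rel < dimRel ((u, v) :: Rel))%N /\ (dimRel ((u, v) :: Rel) <= N)%N.
Proof.
move=> /notcc_notspan Hn; rewrite /dimRel /N; split; last exact/dimvS/subvf.
have sub : (<<diffs Rel>> <= <<diffs ((u, v) :: Rel)>>)%VS.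
  by rewrite /= span_cons addvSr.
have [le eqi] := dimv_leqif_eq sub; rewrite ltn_neqAle le andbT eqi.
apply/eqP => E; move: Hn; rewrite E /= span_cons => /negP; apply.
by apply: subvP (addvSl _ _) _ _; apply: memv_line.
Qed.

Lemma acc_done b : Acc (fun s' s => step s s') (Done R X b).
Proof. by constructor => s' H; inversion H. Qed.

Lemma acc_aux n : forall k Rel todo, (N - dimRel Rel < n)%N -> (size todo < k)%N ->
  Acc (fun s' s => step s s') (Running Rel todo).
Proof.
elim: n => [//|n IHn]; elim => [//|k IHk] Rel todo Hn Hk.
constructor => s' H; inversion H; subst.
- exact: acc_done.
- apply: IHk => //; move: Hk; by rewrite !size_cat /= addnS.
- exact: acc_done.
- apply: (IHn (size (t1 ++ t2 ++ [seq (tau alpha a u, tau alpha a v) | a <- enum A])).+1) => //.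
  have [D1 D2] := dim_expand H2. lia.
Qed.


Lemma acc_init x y : Acc (fun s' s => step s s') (hkc_init R x y).
Proof. exact: (@acc_aux (N - dimRel [::]).+1 2). Qed.

Definition sumcyl w (u : vec) := \sum_z u z * tr_cyl alpha w z.
Definition sumsing w (u : vec) := \sum_z u z * tr_sing alpha w z.

Lemma sum_tau (f : X -> R) a (u : vec) :
  \sum_z u z * (\sum_y alpha z (Some (a, y)) * f y) = \sum_y tau alpha a u y * f y.
Proof.
under eq_bigr do rewrite big_distrr.
rewrite exchange_big /=; apply: eq_bigr => y _.
rewrite ffunE big_distrl /=; apply: eq_bigr => z _; ring.
Qed.

Lemma sumcyl_cons a w u : sumcyl (a :: w) u = sumcyl w (tau alpha a u).
Proof. exact: sum_tau. Qed.
Lemma sumsing_cons a w u : sumsing (a :: w) u = sumsing w (tau alpha a u).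
Proof. exact: sum_tau. Qed.

Lemma sum_lin (f : X -> R) : (forall u u' : vec, \sum_z (u + u') z * f z = \sum_z u z * f z + \sum_z u' z * f z)
  /\ (forall l (u : vec), \sum_z [ffun z => l * u z] z * f z = l * \sum_z u z * f z).
Proof.
split.
  by move=> u u'; rewrite -big_split; apply: eq_bigr => z _; rewrite !ffunE /=; ring.
by move=> l u; rewrite big_distrr; apply: eq_bigr => z _; rewrite !ffunE /=; ring.
Qed.

Lemma cc_lin (Rel : seq (vec * vec)) (f : vec -> R) :
  (forall u u', f (u + u') = f u + f u') ->
  (forall l (u : vec), f [ffun z => l * u z] = l * f u) ->
  (forall u v, (u, v) \in Rel -> f u = f v) ->
  forall u v, cc Rel u v -> f u = f v.
Proof.
move=> fD fZ fR u v; elim.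
- exact: fR.
- by [].
- by move=> ?? _ ->.
- by move=> ??? _ -> _ ->.
- by move=> l ?? _ E; rewrite !fZ E.
- by move=> ???? _ E1 _ E2; rewrite !fD E1 E2.
Qed.

Lemma tauD a (u u' : vec) : tau alpha a (u + u') = tau alpha a u + tau alpha a u'.
Proof.
apply/ffunP => y; rewrite !ffunE -big_split; apply: eq_bigr => z _.
rewrite !ffunE /=; ring.
Qed.

Lemma tauZ a l (u : vec) : tau alpha a [ffun z => l * u z] = [ffun z => l * tau alpha a u z].
Proof.
apply/ffunP => y; rewrite !ffunE big_distrr; apply: eq_bigr => z _.
rewrite !ffunE /=; ring.
Qed.

Lemma cc_tau (Rel : seq (vec * vec)) a :
  (forall u v, (u, v) \in Rel -> cc Rel (tau alpha a u) (tau alpha a v)) ->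
  forall u v, cc Rel u v -> cc Rel (tau alpha a u) (tau alpha a v).
Proof.
move=> fR u v; elim.
- exact: fR.
- by move=> ?; apply: cc_refl.
- by move=> ?? _ H; apply: cc_sym.
- by move=> ??? _ H1 _ H2; apply: cc_trans H1 H2.
- by move=> ??? _ H; rewrite !tauZ; apply: cc_scale.
- by move=> ???? _ H1 _ H2; rewrite !tauD; apply: cc_add.
Qed.

Definition closedRel (Rel : seq (vec * vec)) :=
  forall p, p \in Rel -> [/\ beta1 p.1 = beta1 p.2, betastar alpha p.1 = betastar alpha p.2
     & forall a, cc Rel (tau alpha a p.1) (tau alpha a p.2)].

Lemma closed_good Rel : closedRel Rel -> forall w u v, cc Rel u v ->
  sumcyl w u = sumcyl w v /\ sumsing w u = sumsing w v.
Proof.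
move=> HR; elim => [|a w IH] u v Huv.
  have [lD lZ] := sum_lin (tr_cyl alpha [::]).
  have [sD sZ] := sum_lin (tr_sing alpha [::]).
  split.
    apply: (cc_lin lD lZ _ Huv) => u' v' /HR [E1 _ _].
    by move: E1; rewrite /beta1 => E1; rewrite /=; under eq_bigr do rewrite mulr1;
      rewrite E1; under eq_bigr do rewrite mulr1.
  by apply: (cc_lin sD sZ _ Huv) => u' v' /HR [_ E2 _].
rewrite !sumcyl_cons !sumsing_cons. apply: (IH (tau alpha a u) (tau alpha a v)).
by apply: (cc_tau _ Huv) => u' v' /HR [_ _ ].
Qed.

Lemma sum_delta (f : X -> R) x : \sum_z delta R x z * f z = f x.
Proof.
rewrite (bigD1 x) //= ffunE eqxx mul1r big1 ?addr0 // => z /negbTE zx.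
by rewrite ffunE zx mul0r.
Qed.

Lemma good_trace x y : (forall w, sumcyl w (delta R x) = sumcyl w (delta R y) /\
   sumsing w (delta R x) = sumsing w (delta R y)) -> trace alpha x = trace alpha y.
Proof.
move=> H; apply: functional_extensionality => -[|w|w] //=.
  by have [_ E] := H w; move: E; rewrite /sumsing !sum_delta.
by have [E _] := H w; move: E; rewrite /sumcyl !sum_delta.
Qed.

Lemma trace_good x y : trace alpha x = trace alpha y -> forall w, sumcyl w (delta R x) = sumcyl w (delta R y) /\
   sumsing w (delta R x) = sumsing w (delta R y).
Proof.
move=> H w; rewrite /sumcyl /sumsing !sum_delta; split.
  exact: (f_equal (fun t => t (GCyl w)) H).
exact: (f_equal (fun t => t (GSing w)) H).
Qed.


Definition good (p : vec * vec) := forall w, sumcyl w p.1 = sumcyl w p.2 /\ sumsing w p.1 = sumsing w p.2.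

Definition Inv x y (s : state R X) := match s with
| Running Rel todo =>
   [/\ forall p, p \in Rel -> [/\ beta1 p.1 = beta1 p.2, betastar alpha p.1 = betastar alpha p.2
         & forall a, cc Rel (tau alpha a p.1) (tau alpha a p.2) \/ (tau alpha a p.1, tau alpha a p.2) \in todo],
       cc Rel (delta R x) (delta R y) \/ (delta R x, delta R y) \in todo
     & trace alpha x = trace alpha y -> forall p, p \in todo -> good p]
| Done b => b = true <-> trace alpha x = trace alpha y
end.

Lemma mem_split (q p : vec * vec) t1 t2 : q \in t1 ++ p :: t2 -> q = p \/ q \in t1 ++ t2.
Proof.
rewrite !mem_cat inE => /orP [->|/orP [/eqP ->|->]]; by [left| right | right; rewrite orbT].
Qed.

Lemma inv_init x y : Inv x y (hkc_init R x y).
Proof.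
split => //; first by right; rewrite inE.
by move=> E p; rewrite inE => /eqP ->; apply: trace_good.
Qed.

Lemma inv_step x y s s' : Inv x y s -> step s s' -> Inv x y s'.
Proof.
move=> Hi Hst; destruct Hst as [Rel|Rel t1 t2 u v Hc|Rel t1 t2 u v Hc Hb|Rel t1 t2 u v Hc E1 E2] => /=.
- split => // _; case: Hi => HR Hd _.
  have HR' : closedRel Rel.
    by move=> p /HR [? ? Ht]; split => // a; case: (Ht a).
  case: Hd => // Hd; apply: good_trace => w; exact: closed_good HR' w _ _ Hd.
- case: Hi => HR Hd Hg; split.
  + move=> p /HR [? ? Ht]; split => // a; case: (Ht a) => [|/mem_split [E|]]; auto.
    by left; case: E => -> ->.
  + case: Hd => [|/mem_split [[-> ->]|]]; auto.
  + by move=> E p Hp; apply: (Hg E); rewrite !mem_cat inE; move: Hp; rewrite mem_cat => /orP [->|->];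
      rewrite ?orbT.
- split => // E; case: Hi => _ _ Hg.
  have := Hg E (u, v); rewrite mem_cat inE eqxx orbT => /(_ isT) G.
  have [G1 _] := G [::]; have [_ G2] := G [::].
  move: G1 G2 Hb; rewrite /sumcyl /sumsing /beta1 /betastar /=.
  under eq_bigr do rewrite mulr1. under [X in _ = X -> _]eq_bigr do rewrite mulr1.
  by move=> -> ->; rewrite !eqxx.
- case: Hi => HR Hd Hg.
  have sub : {subset Rel <= (u, v) :: Rel} by move=> p Hp; rewrite inE Hp orbT.
  have old : forall q, q \in t1 ++ (u, v) :: t2 -> cc ((u, v) :: Rel) q.1 q.2 \/
     q \in t1 ++ t2 ++ [seq (tau alpha a u, tau alpha a v) | a <- enum A].
    move=> q /mem_split [->|]; first by left; apply: cc_base; rewrite inE eqxx.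
    by move=> Hq; right; rewrite catA mem_cat Hq.
  split.
  + move=> p; rewrite inE => /orP [/eqP ->|/HR [? ? Ht]].
      split => // a; right; rewrite !mem_cat; apply/orP; right; apply/orP; right.
      by apply/mapP; exists a; rewrite ?mem_enum.
    split => // a; case: (Ht a) => [H|/old //]; left; exact: cc_mono sub H.
  + case: Hd => [H|/old //]; left; exact: cc_mono sub H.
  + move=> E p; rewrite catA mem_cat => /orP [Hp|/mapP [a _ ->]].
      by apply: (Hg E); move: Hp; rewrite !mem_cat inE => /orP [->|->]; rewrite ?orbT.
    have G := Hg E (u, v); rewrite mem_cat inE eqxx orbT in G.
    move=> w; rewrite /= -!sumcyl_cons -!sumsing_cons. exact: (G isT (a :: w)).
Qed.

Lemma inv_reach x y s : reachable alpha (hkc_init R x y) s -> Inv x y s.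
Proof.
elim => [|s1 s2 _ IH H]; first exact: inv_init.
exact: inv_step IH H.
Qed.

End Proofs.

Theorem mainTheorem18 (R : realFieldType) (A X : finType)
    (alpha : X -> option (A * X) -> R) (x y : X) :
  pts alpha ->
  Acc (fun s' s => hkc_step alpha s s') (hkc_init R x y) /\
  (forall s, reachable alpha (hkc_init R x y) s ->
     (forall s', ~ hkc_step alpha s s') ->
     exists b, s = Done R X b /\ (b = true <-> trace alpha x = trace alpha y)).
Proof.
move=> _; split; first exact: acc_init.
move=> s Hr Hstuck; have Hi := inv_reach Hr.
case: s Hi Hstuck Hr => [Rel todo|b] Hi Hstuck _; last by exists b.
exfalso; case: todo Hi Hstuck => [|[u v] t] _ Hstuck.
  by apply: (Hstuck (Done R X true)); constructor.
case: (classic (cc Rel u v)) => Hc.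
  exact: (Hstuck _ (step_skip alpha [::] t Hc)).
case E: ((beta1 u != beta1 v) || (betastar alpha u != betastar alpha v)).
  apply: (Hstuck (Done R X false)); exact: (@step_fail R A X alpha Rel [::] t u v Hc E).
move/negbT: E; rewrite negb_or !negbK => /andP [/eqP E1 /eqP E2].
apply: Hstuck; exact: (@step_expand R A X alpha Rel [::] t u v Hc E1 E2).
Qed.
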